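(* Let $\theta$ be a real-valued treatment-effect parameter, $\delta\in\mathbb{R}$ a clinical margin and $c\in(0,1)$. Let $\pi_{\mathrm{a}}$ (analysis prior) and $\pi_{\mathrm{d}}$ (design prior) be probability distributions on $\theta$ with $\Pr_{\mathrm{d}}(\theta\le\delta)>0$, and let data $\mathcal{D}$ have sampling distribution $f(\mathcal{D}\mid\theta)$. Define $\mathcal{S}(\mathcal{D};c)=\mathbb{I}\{\Pr_{\mathrm{a}}(\theta>\delta\mid\mathcal{D})>c\}$ with $\Pr_{\mathrm{a}}(\cdot\mid\mathcal{D})$ the posterior under $\pi_{\mathrm{a}}$, and the power function $\beta(\theta)=\Pr\{\mathcal{S}(\mathcal{D};c)=1\mid\theta\}$ (probability over $\mathcal{D}\sim f(\cdot\mid\theta)$). Assume $\beta(\theta)$ is strictly increasing in $\theta$. Let the frequentist Type I error rate be $\alpha(c)=\beta(\delta)$ and the Bayesian Type I error rate be $\alpha_B(c)=\int_{\theta\le\delta}\beta(\theta)\,\pi_{\mathrm{d}}(\theta\mid\theta\le\delta)\,d\theta$. Then $\alpha_B(c)\le\alpha(c)$, with equality if and only if $\pi_{\mathrm{d}}$ is a point mass at $\theta=\delta$.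
   Context: $\pi_{\mathrm{d}}(\theta\mid\theta\le\delta)$ denotes the design prior restricted to and renormalized on $\{\theta\le\delta\}$ (the integral is understood with respect to this conditional distribution in general). *)

(* Defs.v *)
From HB Require Import structures.
From mathcomp Require Import all_boot all_order all_algebra.
From mathcomp Require Import all_classical all_reals all_analysis.
Set Implicit Arguments. Unset Strict Implicit. Unset Printing Implicit Defensive.
Import Order.TTheory GRing.Theory Num.Theory.
Local Open Scope classical_set_scope.
Local Open Scope ring_scope.

(* Sampling model: data x in a measurable space X, with sampling density
   f theta x w.r.t. a reference measure mu on X. Priors are probability
   measures on R (Borel sets). *)

(* Posterior probability Pr_a(theta > delta | x) under analysis prior pia,
   by Bayes' formula (0 if the marginal likelihood vanishes). *)
Definition posterior_gt (R : realType) (pia : probability R R)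
  (X : Type) (f : R -> X -> R) (delta : R) (x : X) : R :=
  fine (\int[pia]_(t in [set` `]delta, +oo[]) (f t x)%:E) /
  fine (\int[pia]_(t in setT) (f t x)%:E).

Definition success_set (R : realType) (pia : probability R R)
  (X : Type) (f : R -> X -> R) (delta c : R) : set X :=
  [set x | c < posterior_gt pia f delta x].

Definition power (R : realType) (d : measure_display) (X : measurableType d)
  (mu : {measure set X -> \bar R}) (pia : probability R R)
  (f : R -> X -> R) (delta c : R) (theta : R) : R :=
  fine (\int[mu]_(x in success_set pia f delta c) (f theta x)%:E).

Definition alpha_freq (R : realType) (d : measure_display) (X : measurableType d)
  (mu : {measure set X -> \bar R}) (pia : probability R R)
  (f : R -> X -> R) (delta c : R) : R :=
  power mu pia f delta c delta.

Definition alpha_bayes (R : realType) (d : measure_display) (X : measurableType d)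
  (mu : {measure set X -> \bar R}) (pia pid : probability R R)
  (f : R -> X -> R) (delta c : R) : R :=
  fine (\int[pid]_(t in [set` `]-oo, delta]]) (power mu pia f delta c t)%:E) /
  fine (pid [set` `]-oo, delta]]).

Definition cond_le (R : realType) (pid : probability R R) (delta : R) (A : set R) : R :=
  fine (pid (A `&` [set` `]-oo, delta]])) / fine (pid [set` `]-oo, delta]]).

(* Main.v *)
Require Import Defs.
From HB Require Import structures.
From mathcomp Require Import all_boot all_order all_algebra.
From mathcomp Require Import all_classical all_reals all_analysis.
From mathcomp Require Import measurable_realfun.
From mathcomp.algebra_tactics Require Import lra.
Import Order.TTheory GRing.Theory Num.Theory.
Local Open Scope classical_set_scope.
Local Open Scope ring_scope.

Theorem proposition2 (R : realType) (d : measure_display) (X : measurableType d)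
  (mu : {measure set X -> \bar R}) (pia pid : probability R R)
  (f : R -> X -> R) (delta c : R) :
  0 < c < 1 ->
  (0 < pid [set` `]-oo, delta]])%E ->
  (forall theta x, 0 <= f theta x) ->
  (forall theta, measurable_fun setT (f theta)) ->
  (forall theta, (\int[mu]_(x in setT) (f theta x)%:E = 1)%E) ->
  {homo power mu pia f delta c : t1 t2 / t1 < t2} ->
  alpha_bayes mu pia pid f delta c <= alpha_freq mu pia f delta c /\
  (alpha_bayes mu pia pid f delta c = alpha_freq mu pia f delta c <->
   forall A : set R, measurable A -> cond_le pid delta A = \1_A delta).
Proof.
move=> _ p0 f0 _ _ Pinc.
rewrite /alpha_bayes /alpha_freq /cond_le.
set P := power mu pia f delta c.
set D := [set` `]-oo, delta]].
set N := [set` `]-oo, delta[].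
set a := P delta.
have P0 t : 0 <= P t.
  by apply: fine_ge0; apply: integral_ge0 => x _; rewrite lee_fin; apply: f0.
have Pnd : nondecreasing_fun P.
  move=> s t; rewrite le_eqVlt; case/orP => [/eqP ->//|st].
  exact/ltW/Pinc.
have mD : measurable D by exact: measurable_itv.
have mN : measurable N by exact: measurable_itv.
have mP : measurable_fun D (EFin \o P).
  by apply/measurable_EFinP; apply: nondecreasing_measurable.
have PleA t : D t -> P t <= a.
  by rewrite /D /= in_itv /= => /Pnd.
have pfin : pid D = (fine (pid D))%:E.
  rewrite fineK // ge0_fin_numE //. 
  by apply: (le_lt_trans (probability_le1 _ mD)); exact: ltey.
set I := (\int[pid]_(t in D) (P t)%:E)%E.
have I0 : (0 <= I)%E by apply: integral_ge0 => t _; rewrite lee_fin.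
have Ile : (I <= a%:E * pid D)%E.
  rewrite -integral_cst //; apply: ge0_le_integral => //.
  all: try (by move=> t _; rewrite lee_fin).
  all: try (by move=> t Dt; rewrite lee_fin PleA).
have Ifin : I = (fine I)%:E.
  rewrite fineK // ge0_fin_numE //; apply: (le_lt_trans Ile).
  by rewrite pfin -EFinM ltey.
have fp0 : 0 < fine (pid D) by rewrite -lte_fin -pfin.
split.
  rewrite ler_pdivrMr //; rewrite -lee_fin -Ifin EFinM -pfin //.
have Dfin A : measurable A -> pid A = (fine (pid A))%:E.
  move=> mA; rewrite fineK // ge0_fin_numE //.
  by apply: (le_lt_trans (probability_le1 _ mA)); exact: ltey.
have ND : N `<=` D.
  by move=> x; rewrite /N /D /= !in_itv /= => /ltW.
have condN : pid N = 0%E -> forall A : set R, measurable A ->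
    fine (pid (A `&` D)) / fine (pid D) = \1_A delta.
  move=> pN A mA; rewrite indicE.
  have mAD : measurable (A `&` D) by exact: measurableI.
  have [dA|dA] := boolP (delta \in A).
    have h0 : pid (D `\` A) = 0%E.
      apply/eqP; rewrite eq_le measure_ge0 andbT -pN.
      apply: le_measure; rewrite ?inE //; first exact: measurableD.
      move=> x [Dx nAx]; move: Dx; rewrite /D /N /= !in_itv /= le_eqVlt.
      by case/orP => // /eqP xd; exfalso; apply: nAx; rewrite xd; apply/set_mem.
    have -> : pid (A `&` D) = pid D.
      rewrite [RHS](measureDI pid mD mA) setIC -[X in X = _]add0e.
      by congr (_ + _)%E; rewrite -h0.
    by rewrite divff // gt_eqF.
  have -> : pid (A `&` D) = 0%E.
    apply/eqP; rewrite eq_le measure_ge0 andbT -pN.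
    apply: le_measure; rewrite ?inE //.
    move=> x [Ax]; rewrite /D /N /= !in_itv /= le_eqVlt.
    case/orP => // /eqP xd; exfalso; move/negP: dA; apply; rewrite -xd; exact/mem_set.
  by rewrite /= mul0r.
split => [Heq|H]; last first.
  have pN : pid N = 0%E.
    have := H N mN; rewrite setIidl // indicE.
    have -> : (delta \in N) = false.
      by apply/negbTE/negP => /set_mem; rewrite /N /= in_itv /= ltxx.
    move/eqP; rewrite mulf_eq0 invr_eq0 (gt_eqF fp0) orbF => /eqP f0N.
    by rewrite (Dfin _ mN) f0N.
  have -> : I = (a%:E * pid D)%E.
    rewrite -integral_cst //; apply: ae_eq_integral => //.
    rewrite /ae_eq; exists N; split => // x /= Hx; rewrite /N /= in_itv /=.
    apply: contrapT => nx; apply: Hx => Dx; congr (_%:E).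
    move: Dx; rewrite /D /= in_itv /= le_eqVlt => /orP [/eqP -> //|xd].
    by exfalso; apply: nx.
  by rewrite pfin -EFinM /= mulfK // gt_eqF.
have HI : I = (a%:E * pid D)%E.
  move/(congr1 (fun z => z * fine (pid D))): Heq; rewrite divfK ?gt_eqF // => HI.
  by rewrite Ifin HI pfin -EFinM.
apply: condN.
apply/eqP; rewrite eq_le measure_ge0 andbT leNgt; apply/negP => pNpos.
pose E := fun k : nat => [set` `]-oo, delta - k.+1%:R^-1]] : set R.
have mE k : measurable (E k) by exact: measurable_itv.
have [[k pk]|nk] := pselect (exists k, (0 < pid (E k))%E); last first.
  have NE : N = \bigcup_k E k.
    apply/seteqP; split => x /=.
      rewrite /N /= in_itv /= => xd.
      exists (Num.truncn ((delta - x)^-1)) => //=; rewrite /E /= in_itv /=.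
      have : (Num.truncn ((delta - x)^-1)).+1%:R^-1 <= delta - x.
        rewrite invf_ple ?posrE ?subr_gt0 ?ltr0n //; exact/ltW/truncnS_gt.
      by move=> h; have := lerB (lexx delta) h; rewrite opprB addrC subrK.
    move=> [k _]; rewrite /E /= in_itv /= => xk; rewrite /N /= in_itv /=.
    by apply: (le_lt_trans xk); rewrite gtrBl invr_gt0 ltr0n.
  have : pid.-negligible N.
    rewrite NE; apply: negligible_bigcup => k; exists (E k); split => //.
    apply/eqP; rewrite eq_le measure_ge0 andbT leNgt; apply/negP => h.
    by apply: nk; exists k.
  case => M [mM pM NM].
  have : (pid N <= pid M)%E by apply: le_measure; rewrite ?inE.
  by rewrite pM leNgt pNpos.
set e := k.+1%:R^-1 : R.
have e0 : 0 < e by rewrite invr_gt0 ltr0n.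
set b := P (delta - e).
have ba : b < a by apply: Pinc; rewrite gtrBl.
have ED : E k `<=` D.
  by move=> x; rewrite /E /D /= !in_itv /= => /le_trans; apply; rewrite gerBl; exact: ltW.
have mDE : measurable (D `\` E k) by exact: measurableD.
have Isplit : I = (\int[pid]_(t in E k) (P t)%:E + \int[pid]_(t in D `\` E k) (P t)%:E)%E.
  rewrite /I -[in LHS](setDUK ED) ge0_integral_setU //.
  - by rewrite setDUK.
  - by move=> t _; rewrite lee_fin.
  - by rewrite disj_set2E setDIK.
have I1 : (\int[pid]_(t in E k) (P t)%:E <= b%:E * pid (E k))%E.
  rewrite -integral_cst //; apply: ge0_le_integral => //.
  all: try (by move=> t _; rewrite lee_fin).
  all: try (by apply: measurable_funS mP).
  by move=> t; rewrite /E /= in_itv /= => /Pnd; rewrite lee_fin.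
have I2 : (\int[pid]_(t in D `\` E k) (P t)%:E <= a%:E * pid (D `\` E k))%E.
  rewrite -integral_cst //; apply: ge0_le_integral => //.
  all: try (by move=> t _; rewrite lee_fin).
  all: try (by apply: measurable_funS mP).
  by move=> t [Dt _]; rewrite lee_fin PleA.
have pDs : pid D = (pid (D `\` E k) + pid (E k))%E.
  rewrite [LHS](measureDI pid mD (mE k)); congr (_ + _)%E.
  by rewrite setIidr.
have : (I < a%:E * pid D)%E.
  rewrite Isplit; apply: (le_lt_trans (leeD I1 I2)).
  rewrite pDs (Dfin _ (mE k)) (Dfin _ mDE) -!EFinM -EFinD lte_fin.
  have pe : 0 < fine (pid (E k)) by rewrite -lte_fin -Dfin.
  rewrite mulrDr [X in _ < X]addrC; apply: ltr_leD => //; rewrite ltr_pM2r.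
  by [].
  by [].
by rewrite HI ltxx.
Qed.
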